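(* Let $Y=\mathbf{F}_e$ and let $A\equiv C_0+bf$ be a very ample divisor on $Y$. Let $P_1,\dots,P_r$ be $r$ distinct points of $Y$, no two on the same fibre, and let $F=\{f_1,\dots,f_r\}$ where $f_i=\rho^*(\rho(P_i))$ is the fibre through $P_i$. If $h^0(Y,A)\ge2r$, then for any fixed finite set $\Phi$ of fibres with $\Phi\cap F=\emptyset$ there exists at least one element $\gamma\in|A|$ which passes through $P_1,\dots,P_r$, is smooth at each $P_i$, and intersects every fibre of $\Phi$ transversely.
   Context: $\mathbf{F}_e=\mathbb{P}(\mathcal{O}_{\mathbb{P}^1}\oplus\mathcal{O}_{\mathbb{P}^1}(-e))$, $e\ge0$, with ruling $\rho:\mathbf{F}_e\to\mathbb{P}^1$; $C_0$ ($C_0^2=-e$) and $f$ (fibre class) are the standard generators of $\mathrm{Pic}(\mathbf{F}_e)$. *)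

(* Defs.v *)
(* Concrete Cox-coordinate model of the Hirzebruch surface
   F_e = P(O + O(-e)) over a field k:
     F_e = ((k^2 \ 0) x (k^2 \ 0)) / (k^* )^2,
     (lam,mu).(x0,x1,y0,y1) = (lam x0, lam x1, mu y0, lam^e mu y1),
   ruling rho [x0:x1:y0:y1] = [x0:x1] in P^1.
   A point is represented by (x, y) with x = (x0,x1) <> 0, y = (y0,y1) <> 0.
   Global sections of O(C_0 + b f) are the bihomogeneous forms
     s = y0 * g(x0,x1) + y1 * h(x0,x1),  deg g = b, deg h = b - e,
   (H^0 = H^0(P^1,O(b)) + H^0(P^1,O(b-e))); the curve {y0 = 0} is C_0. *)
From mathcomp Require Import all_boot all_order all_algebra.
Set Implicit Arguments. Unset Strict Implicit. Unset Printing Implicit Defensive.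
Import GRing.Theory.
Local Open Scope ring_scope.

Section Hirzebruch.
Variable k : fieldType.

Definition bform (n : nat) (c : 'I_n.+1 -> k) (x0 x1 : k) : k :=
  \sum_(i < n.+1) c i * x0 ^+ i * x1 ^+ (n - i).
Definition bform_d0 (n : nat) (c : 'I_n.+1 -> k) (x0 x1 : k) : k :=
  \sum_(i < n.+1) (c i *+ i) * x0 ^+ i.-1 * x1 ^+ (n - i).
Definition bform_d1 (n : nat) (c : 'I_n.+1 -> k) (x0 x1 : k) : k :=
  \sum_(i < n.+1) (c i *+ (n - i)) * x0 ^+ i * x1 ^+ (n - i).-1.

Variables (e b : nat).
Variables (g : 'I_b.+1 -> k) (h : 'I_(b - e).+1 -> k).

Definition sec_eval (x y : k * k) : k :=
  y.1 * bform g x.1 x.2 + y.2 * bform h x.1 x.2.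
Definition sec_dx0 (x y : k * k) : k :=
  y.1 * bform_d0 g x.1 x.2 + y.2 * bform_d0 h x.1 x.2.
Definition sec_dx1 (x y : k * k) : k :=
  y.1 * bform_d1 g x.1 x.2 + y.2 * bform_d1 h x.1 x.2.
Definition sec_dy0 (x y : k * k) : k := bform g x.1 x.2.
Definition sec_dy1 (x y : k * k) : k := bform h x.1 x.2.

Definition nonzero_section : Prop :=
  (exists i, g i != 0) \/ (exists j, h j != 0).

(* the curve gamma = div(s) passes through the point [x:y] and is smooth
   there: s vanishes and its differential (in Cox coordinates, via the
   smooth torus-quotient map) is nonzero *)
Definition smooth_at (x y : k * k) : Prop :=
  sec_eval x y = 0 /\
  ~ [/\ sec_dx0 x y = 0, sec_dx1 x y = 0, sec_dy0 x y = 0 & sec_dy1 x y = 0].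

(* gamma meets the fibre rho^{-1}([t0:t1]) transversely: at every point of
   gamma on that fibre, the restriction of s to the fibre (coordinates y)
   has a simple zero, i.e. nonzero derivative along the fibre.  (If the
   fibre lies in gamma this fails.) *)
Definition transverse_fibre (t : k * k) : Prop :=
  forall y : k * k, y != (0, 0) -> sec_eval t y = 0 ->
    (sec_dy0 t y, sec_dy1 t y) != (0, 0).

End Hirzebruch.

Definition same_fibre (k : fieldType) (x x' : k * k) : bool :=
  x.1 * x'.2 == x.2 * x'.1.

(* h^0(F_e, O(C_0 + b f)) = (b+1) + (b-e+1) for b >= e *)
Definition h0_A (e b : nat) : nat := (b.+1 + (b - e).+1)%N.

(* Main.v *)
Require Import Defs.
From mathcomp Require Import all_boot all_order all_algebra ring zify.
Import GRing.Theory.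

Local Open Scope ring_scope.

Lemma fresh_elt {k : closedFieldType} (s : seq k) : exists a : k, a \notin s.
Proof.
set q := \prod_(c <- s) ('X - c%:P).
have sq : size q = (size s).+1 by rewrite size_prod_XsubC.
have nzq : q != 0 by rewrite -size_poly_eq0 sq.
have sp : size (q * 'X + 1) = (size s).+2.
  have e1 : size (q * 'X) = (size s).+2 by rewrite size_mulX // sq.
  by rewrite size_addl e1 // size_poly1.
have [x rx] : exists x, root (q * 'X + 1) x by apply/closed_rootP; rewrite sp.
exists x; apply/negP => xs.
move: rx; rewrite /root !hornerE.
have -> : q.[x] = 0.
  rewrite /q horner_prod; apply/eqP; rewrite prodf_seq_eq0; apply/hasP.
  by exists x => //=; rewrite !hornerE subrr.
by rewrite mul0r add0r oner_eq0.
Qed.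

Definition cf {k : fieldType} (n : nat) (p : {poly k}) : 'I_n.+1 -> k := fun i => p`_i.
Definition hom {k : fieldType} (n : nat) (p : {poly k}) (x : k * k) : k :=
  bform (cf n p) x.1 x.2.

Lemma hom_inf {k : fieldType} n (p : {poly k}) x0 : hom n p (x0, 0) = p`_n * x0 ^+ n.
Proof.
rewrite /hom /bform /= big_ord_recr /= subnn expr0 mulr1 big1 ?add0r //.
move=> i _; rewrite expr0n subn_eq0 leqNgt ltn_ord /= mulr0 //.
Qed.

Lemma hom_fin {k : fieldType} n (p : {poly k}) x0 x1 : x1 != 0 -> (size p <= n.+1)%N ->
  hom n p (x0, x1) = x1 ^+ n * p.[x0 / x1].
Proof.
move=> x1n sp; rewrite /hom /bform /= (horner_coef_wide _ sp) mulr_sumr.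
apply: eq_bigr => i _; rewrite /cf exprMn exprVn (exprB (ltnSE (ltn_ord i))) ?unitfE //.
by rewrite /cf; ring.
Qed.

Lemma hom_add {k : fieldType} n (p q : {poly k}) x : hom n (p + q) x = hom n p x + hom n q x.
Proof. by rewrite /hom /bform -big_split; apply: eq_bigr => i _; rewrite /cf coefD !mulrDl. Qed.

Lemma hom0 {k : fieldType} n x : hom n (0 : {poly k}) x = 0.
Proof. by rewrite /hom /bform big1 // => i _; rewrite /cf coef0 !mul0r. Qed.

Lemma homZ (k : fieldType) n (c : k) p x : hom n (c *: p) x = c * hom n p x.
Proof. by rewrite /hom /bform mulr_sumr; apply: eq_bigr => i _; rewrite /cf coefZ !mulrA. Qed.

Lemma hom_sum {k : fieldType} n (I : finType) (F : I -> {poly k}) x :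
  hom n (\sum_i F i) x = \sum_i hom n (F i) x.
Proof.
elim/big_rec2: _ => [|i y p _ <-]; first by rewrite hom0.
by rewrite hom_add.
Qed.

Lemma coef_top {k : fieldType} n m (p q : {poly k}) :
  (size p <= n.+1)%N -> (size q <= m.+1)%N -> (p * q)`_(n + m) = p`_n * q`_m.
Proof.
move=> sp sq; rewrite coefM (bigD1 (@Ordinal (n + m).+1 n (leq_addr m n))) //= addKn big1 ?addr0 //.
move=> j nj; have [ltjn|] := ltnP j n.
  rewrite [q`__]nth_default ?mulr0 //; apply: leq_trans sq _; lia.
move=> lejn; rewrite [p`__]nth_default ?mul0r //; apply: leq_trans sp _.
have : (nat_of_ord j != n) by apply: contra nj => /eqP e; apply/eqP/val_inj.
lia.
Qed.

Lemma hom_mul {k : fieldType} n m (p q : {poly k}) x :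
  (size p <= n.+1)%N -> (size q <= m.+1)%N ->
  hom (n + m) (p * q) x = hom n p x * hom m q x.
Proof.
move=> sp sq; case: x => x0 x1.
have [->|x1n] := eqVneq x1 0.
  by rewrite !hom_inf (coef_top _ _ _ _ sp sq) exprD; ring.
have spq : (size (p * q)%R <= (n + m).+1)%N.
  by apply: leq_trans (size_polyMleq p q) _; lia.
by rewrite !hom_fin // hornerM exprD; ring.
Qed.

Lemma size_deriv_le {k : fieldType} (p : {poly k}) : (size p^`() <= (size p).-1)%N.
Proof. exact: size_poly. Qed.

Lemma d0_eq {k : fieldType} n (p : {poly k}) x0 x1 :
  bform_d0 (cf n.+1 p) x0 x1 = hom n (p^`()) (x0, x1).
Proof.
rewrite /bform_d0 big_ord_recl /= mulr0n !mul0r add0r /hom /bform.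
by apply: eq_bigr => i _; rewrite /cf coef_deriv /= subSS.
Qed.

Lemma d1_inf {k : fieldType} n (p : {poly k}) x0 :
  bform_d1 (cf n.+1 p) x0 0 = p`_n * x0 ^+ n.
Proof.
rewrite /bform_d1 big_ord_recr /= subnn mulr0n !mul0r addr0.
rewrite big_ord_recr /= subSnn /= expr0 mulr1 mulr1n big1 ?add0r // => i _.
rewrite expr0n /=.
have -> : ((n.+1 - i).-1 == 0)%N = false by have := ltn_ord i; lia.
by rewrite mulr0.
Qed.

Definition Lf {k : fieldType} (x : k * k) : {poly k} := Poly [:: - x.1; x.2].

Lemma size_Lf {k : fieldType} (x : k * k) : (size (Lf x) <= 2)%N.
Proof. exact: size_Poly. Qed.

Lemma Lf_E {k : fieldType} (x : k * k) : Lf x = x.2 *: 'X - x.1%:P.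
Proof.
apply/polyP => i; rewrite coef_Poly coefB coefZ coefX coefC.
by case: i => [|[|i]] /=; rewrite ?mulr0 ?mulr1 ?subr0 ?sub0r ?nth_nil ?subrr.
Qed.

Lemma hom1_Lf {k : fieldType} (x y : k * k) : hom 1 (Lf x) y = x.2 * y.1 - x.1 * y.2.
Proof.
rewrite /hom /bform big_ord_recr big_ord1 /= /cf !coef_Poly /=.
by rewrite !expr0 !expr1 !mulr1; ring.
Qed.

Lemma hom_one {k : fieldType} (y : k * k) : hom 0 1 y = 1.
Proof. by rewrite /hom /bform big_ord1 /cf coef1 /= !expr0 !mulr1. Qed.

Lemma hom_prodL {k : fieldType} (I : Type) (s : seq I) (P : pred I) (F : I -> k * k) y :
  (size (\prod_(j <- s | P j) Lf (F j))%R <= (count P s).+1)%N /\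
  hom (count P s) (\prod_(j <- s | P j) Lf (F j)) y = \prod_(j <- s | P j) hom 1 (Lf (F j)) y.
Proof.
elim: s => [|j s [IHs IHh]]; first by rewrite !big_nil size_poly1 hom_one.
rewrite !big_cons /=; case: (P j) => //=.
split.
  apply: leq_trans (size_polyMleq _ _) _.
  have := size_Lf (F j); move: IHs; set a := size _; set b := size _; move=> *. lia.
by rewrite hom_mul ?IHh // size_Lf.
Qed.

Lemma hom_powL {k : fieldType} (z : k * k) j y :
  (size (Lf z ^+ j)%R <= j.+1)%N /\ hom j (Lf z ^+ j) y = (hom 1 (Lf z) y) ^+ j.
Proof.
elim: j => [|j [IHs IHh]]; first by rewrite !expr0 size_poly1 hom_one.
rewrite !exprS; split.
  apply: leq_trans (size_polyMleq _ _) _.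
  by have := size_Lf z; lia.
by rewrite -add1n hom_mul ?IHh // size_Lf.
Qed.

Lemma card_count (I : finType) (P : pred I) : #|P| = count P (index_enum I).
Proof. by rewrite -sum1_count -sum1_card. Qed.

Lemma hom_PM {k : fieldType} (I : finType) (P : pred I) (F : I -> k * k) (z : k * k) j d y :
  d = (#|P| + j)%N ->
  (size (\prod_(i | P i) Lf (F i) * Lf z ^+ j)%R <= d.+1)%N /\
  hom d (\prod_(i | P i) Lf (F i) * Lf z ^+ j) y =
    (\prod_(i | P i) hom 1 (Lf (F i)) y) * (hom 1 (Lf z) y) ^+ j.
Proof.
move=> ->; rewrite card_count.
have [s1 h1] := @hom_prodL _ I (index_enum I) P F y.
have [s2 h2] := hom_powL z j y.
split; last by rewrite hom_mul // h1 h2.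
apply: leq_trans (size_polyMleq _ _) _; move: s1 s2.
set a := size _; set b := size _; lia.
Qed.

Lemma simple_root {k : fieldType} n (x : k * k) (q : {poly k}) :
  x != (0, 0) -> (size q <= n.+1)%N -> hom n q x != 0 ->
  ~ (bform_d0 (cf n.+1 (Lf x * q)) x.1 x.2 = 0 /\ bform_d1 (cf n.+1 (Lf x * q)) x.1 x.2 = 0).
Proof.
case: x => x0 x1 /= nz sq hq [D0 D1].
have [x10|x1n] := eqVneq x1 0.
  subst x1; move: D1; rewrite d1_inf Lf_E /= scale0r sub0r -polyCN coefCM.
  have x0n : x0 != 0 by apply: contra nz => /eqP ->.
  move/eqP; rewrite !mulf_eq0 oppr_eq0 expf_eq0 (negbTE x0n) andbF orbF /=.
  by move: hq; rewrite hom_inf mulf_eq0 expf_eq0 (negbTE x0n) andbF orbF => /negbTE ->.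
have sLq : (size (Lf (x0, x1) * q)%R <= n.+2)%N.
  apply: leq_trans (size_polyMleq _ _) _; move: sq (size_Lf (x0, x1)).
  set a := size _; set b := size _; lia.
have sd : (size (Lf (x0, x1) * q)^`()%R <= n.+1)%N.
  by apply: leq_trans (size_deriv_le _) _; move: sLq; set a := size _; lia.
have LA : (Lf (x0, x1)).[x0 / x1] = 0.
  by rewrite /Lf horner_Poly /= mul0r add0r; field.
have dL : (Lf (x0, x1))^`() = x1%:P.
  by rewrite Lf_E /= derivB derivZ derivX derivC subr0 alg_polyC.
move: D0; rewrite d0_eq hom_fin // derivM hornerD !hornerM LA mul0r addr0 dL hornerC.
move/eqP; rewrite !mulf_eq0 expf_eq0 (negbTE x1n) andbF /=.
move: hq; rewrite hom_fin // mulf_eq0 expf_eq0 (negbTE x1n) andbF /=.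
by move=> /negbTE ->.
Qed.

Lemma hom_self {k : fieldType} (x : k * k) : hom 1 (Lf x) x = 0.
Proof. by rewrite hom1_Lf mulrC subrr. Qed.

Lemma hom_nsf {k : fieldType} (x y : k * k) : ~~ same_fibre y x -> hom 1 (Lf x) y != 0.
Proof.
rewrite hom1_Lf /same_fibre subr_eq0; apply: contra => /eqP E.
by rewrite mulrC E mulrC.
Qed.

Lemma prod_hom_eq0 {k : fieldType} (I : finType) (P : pred I) (F : I -> k * k) j :
  P j -> \prod_(i | P i) hom 1 (Lf (F i)) (F j) = 0.
Proof. by move=> Pj; rewrite (bigD1 j) //= hom_self mul0r. Qed.

Lemma prod_hom_neq0 {k : fieldType} (I : finType) (P : pred I) (F : I -> k * k) y :
  (forall i, P i -> ~~ same_fibre y (F i)) -> \prod_(i | P i) hom 1 (Lf (F i)) y != 0.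
Proof.
move=> H; rewrite prodf_seq_neq0; apply/allP => i _; apply/implyP => Pi.
exact: hom_nsf (H i Pi).
Qed.

Lemma Lf_neq0 {k : fieldType} (x : k * k) : x != (0, 0) -> Lf x != 0.
Proof.
case: x => x0 x1 nz; apply/eqP => E; move: nz.
have c0 : (Lf (x0, x1))`_0 = - x0 by rewrite coef_Poly.
have c1 : (Lf (x0, x1))`_1 = x1 by rewrite coef_Poly.
rewrite E !coef0 in c0 c1; move/eqP: c0; rewrite eq_sym oppr_eq0 => /eqP ->.
by rewrite -c1 eqxx.
Qed.

Lemma prodLf_neq0 {k : fieldType} (I : finType) (P : pred I) (F : I -> k * k) :
  (forall i, F i != (0, 0)) -> \prod_(i | P i) Lf (F i) != 0.
Proof.
move=> H; rewrite prodf_seq_neq0; apply/allP => i _; apply/implyP => _.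
exact: Lf_neq0.
Qed.

Lemma coef_nz {k : fieldType} n (p : {poly k}) :
  (size p <= n.+1)%N -> p != 0 -> exists j : 'I_n.+1, cf n p j != 0.
Proof.
move=> sp pn.
have lt : ((size p).-1 < n.+1)%N.
  by move: pn; rewrite -size_poly_eq0; move: sp; set a := size p; lia.
by exists (Ordinal lt); rewrite /cf /= -lead_coefE lead_coef_eq0.
Qed.

Lemma M_nz {k : fieldType} (a : k) (y : k * k) :
  y != (0, 0) -> a != y.1 / y.2 -> hom 1 (Lf (a, 1)) y != 0.
Proof.
case: y => y0 y1 /= nz na; rewrite hom1_Lf /= mul1r.
have [y10|y1n] := eqVneq y1 0.
  subst y1; rewrite mulr0 subr0; by apply: contra nz => /eqP ->.
apply: contra na; rewrite subr_eq0 => /eqP ->; by rewrite mulfK.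
Qed.

Lemma d0_zero {k : fieldType} n x0 x1 : bform_d0 (cf n (0 : {poly k})) x0 x1 = 0.
Proof. by rewrite /bform_d0 big1 // => i _; rewrite /cf coef0 mul0rn !mul0r. Qed.
Lemma d1_zero {k : fieldType} n x0 x1 : bform_d1 (cf n (0 : {poly k})) x0 x1 = 0.
Proof. by rewrite /bform_d1 big1 // => i _; rewrite /cf coef0 mul0rn !mul0r. Qed.

Theorem lemma4p1 (k : closedFieldType) (e b r m : nat)
    (Px Py : 'I_r -> k * k) (Phi : 'I_m -> k * k) :
  (e < b)%N ->
  (forall i, Px i != (0, 0)) -> (forall i, Py i != (0, 0)) ->
  (forall i j : 'I_r, i != j -> ~~ same_fibre (Px i) (Px j)) ->
  (forall l, Phi l != (0, 0)) ->
  (forall l i, ~~ same_fibre (Phi l) (Px i)) ->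
  (2 * r <= h0_A e b)%N ->
  exists (g : 'I_b.+1 -> k) (h : 'I_(b - e).+1 -> k),
    [/\ nonzero_section g h,
        forall i, smooth_at g h (Px i) (Py i)
      & forall l, transverse_fibre g h (Phi l)].
Proof.
move=> eb Pxn Pyn Pdist Phin PhiF hcount.
pose s := [seq (Px i).1 / (Px i).2 | i <- enum 'I_r] ++
          [seq (Phi l).1 / (Phi l).2 | l <- enum 'I_m].
have [a ha] := fresh_elt s.
pose M : {poly k} := Lf (a, 1).
have MPx : forall i, hom 1 M (Px i) != 0.
  move=> i; apply: M_nz => //; apply: contra ha => /eqP ->.
  by rewrite mem_cat; apply/orP; left; apply/mapP; exists i; rewrite ?mem_enum.
have MPhi : forall l, hom 1 M (Phi l) != 0.
  move=> l; apply: M_nz => //; apply: contra ha => /eqP ->.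
  by rewrite mem_cat; apply/orP; right; apply/mapP; exists l; rewrite ?mem_enum.
have Mnz : M != 0 by apply: Lf_neq0; rewrite /= xpair_eqE oner_eq0 andbF.
pose Zp := fun i : 'I_r => (Py i).1 == 0.
have hcard : (#|Zp| + #|[pred i | ~~ Zp i]|)%N = r.
  by rewrite (cardC Zp) card_ord.
move: hcount; rewrite /h0_A => hcount.
have [caseA|caseB] := leqP #|Zp| (b - e).
-
  have rle : (r <= b.+1)%N.
    move: hcard hcount caseA; set c1 := #|Zp|; set c2 := #|_|; lia.
  have HH := fun y => @hom_PM k _ Zp Px (a, 1) (b - e - #|Zp|) (b - e) y (esym (subnKC caseA)).
  pose h := \prod_(i | Zp i) Lf (Px i) * M ^+ (b - e - #|Zp|).
  have sh : (size h <= (b - e).+1)%N by case: (HH 0).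
  have hh : forall y, hom (b - e) h y =
      (\prod_(i | Zp i) hom 1 (Lf (Px i)) y) * (hom 1 M y) ^+ (b - e - #|Zp|).
    by move=> y; case: (HH y).
  have hnz : h != 0 by rewrite mulf_neq0 ?expf_neq0 // prodLf_neq0.
  pose Q := fun i : 'I_r => \prod_(j | j != i) Lf (Px j) * M ^+ (b.+1 - r).
  have hQ : forall i y, hom b (Q i) y =
      (\prod_(j | j != i) hom 1 (Lf (Px j)) y) * (hom 1 M y) ^+ (b.+1 - r).
    move=> i y.
    have r0 : (0 < r)%N := leq_ltn_trans (leq0n i) (ltn_ord i).
    have cQ : #|(fun j => j != i)| = r.-1.
      by have := cardC1 i; rewrite card_ord => <-; apply: eq_card => j; rewrite !inE.
    have dE : b = (#|(fun j => j != i)| + (b.+1 - r))%N.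
      by rewrite cQ; move: rle r0; lia.
    by case: (@hom_PM k _ (fun j => j != i) Px (a, 1) (b.+1 - r) b y dE).
  have QNZ : forall i, hom b (Q i) (Px i) != 0.
    move=> i; rewrite hQ mulf_neq0 ?expf_neq0 //.
    by apply: prod_hom_neq0 => l Pl; apply: Pdist; rewrite eq_sym.
  have QZ : forall i j, i != j -> hom b (Q i) (Px j) = 0.
    move=> i j nij; rewrite hQ (@prod_hom_eq0 k _ (fun l => l != i)) ?mul0r //.
    by rewrite eq_sym.
  pose t := fun j => if Zp j then 1 else - hom (b - e) h (Px j) * (Py j).2 / (Py j).1.
  pose g := \sum_i (t i / hom b (Q i) (Px i)) *: Q i.
  have hg : forall j, hom b g (Px j) = t j.
    move=> j; rewrite hom_sum (bigD1 j) //= big1 ?addr0 => [|i nij].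
      by rewrite homZ divfK.
    by rewrite homZ (QZ i j nij) mulr0.
  exists (cf b g), (cf (b - e) h); split.
  - by right; apply: coef_nz.
  - move=> j.
    have Eg : bform (cf b g) (Px j).1 (Px j).2 = hom b g (Px j) by [].
    have Eh : bform (cf (b - e) h) (Px j).1 (Px j).2 = hom (b - e) h (Px j) by [].
    rewrite /smooth_at /sec_eval /sec_dy0 /sec_dy1 Eg Eh hg /t.
    case Zj : (Zp j).
    + split; first by rewrite (eqP Zj) mul0r add0r hh prod_hom_eq0 ?mul0r ?mulr0.
      by case=> _ _ G _; move: G; apply/eqP; rewrite oner_eq0.
    + have y1n : (Py j).1 != 0 by rewrite /Zp in Zj; rewrite Zj.
      split; first by field.
      case=> _ _ _ G; move: G; apply/eqP; rewrite hh mulf_neq0 ?expf_neq0 //.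
      apply: prod_hom_neq0 => l Pl; apply: Pdist; apply/eqP => E.
      by move: Pl; rewrite -E Zj.
  - move=> l y _ _; apply/negP => /eqP [_ G].
    move: G; rewrite /sec_dy1 -/(hom (b - e) h (Phi l)) hh; apply/eqP.
    rewrite mulf_neq0 ?expf_neq0 //; apply: prod_hom_neq0 => i _; exact: PhiF.
-
  have [b' Eb] : exists b', b = b'.+1 by exists b.-1; rewrite prednK // (leq_ltn_trans (leq0n e) eb).
  subst b.
  pose PN := [pred i | ~~ Zp i].
  have cNle : (#|PN| <= b'.+1)%N by move: hcard hcount caseB; rewrite /PN; lia.
  pose g := \prod_(i | PN i) Lf (Px i) * M ^+ (b'.+1 - #|PN|).
  have HG := fun y => @hom_PM k _ PN Px (a, 1) (b'.+1 - #|PN|) b'.+1 y (esym (subnKC cNle)).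
  have sg : (size g <= b'.+2)%N by case: (HG 0).
  have hg : forall y, hom b'.+1 g y =
      (\prod_(i | PN i) hom 1 (Lf (Px i)) y) * (hom 1 M y) ^+ (b'.+1 - #|PN|).
    by move=> y; case: (HG y).
  have gnz : g != 0.
    by rewrite mulf_neq0 ?expf_neq0 // prodLf_neq0.
  exists (cf b'.+1 g), (cf (b'.+1 - e) 0); split.
  - by left; apply: coef_nz.
  - move=> i.
    have Eg : bform (cf b'.+1 g) (Px i).1 (Px i).2 = hom b'.+1 g (Px i) by [].
    have E0 : bform (cf (b'.+1 - e) 0) (Px i).1 (Px i).2 = 0 := hom0 _ _.
    rewrite /smooth_at /sec_eval /sec_dx0 /sec_dx1 /sec_dy0 /sec_dy1 Eg E0.
    rewrite !d0_zero !d1_zero !mulr0 !addr0.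
    have [Zi|Zi] := boolP (Zp i).
    + split; first by rewrite (eqP Zi) mul0r.
      case=> _ _ G _; move: G; apply/eqP; rewrite hg mulf_neq0 ?expf_neq0 //.
      apply: prod_hom_neq0 => l Pl; apply: Pdist; apply/eqP => E.
      by move: Pl; rewrite -E /= Zi.
    + have Pi : PN i by [].
      split; first by rewrite hg prod_hom_eq0 // mul0r mulr0.
      pose P' := fun l => PN l && (l != i).
      have cP : #|PN| = #|P'|.+1.
        rewrite (cardD1 i) (_ : i \in PN = true) // add1n; congr _.+1; apply: eq_card => l.
        by rewrite !inE /P' andbC.
      have dE : b' = (#|P'| + (b'.+1 - #|PN|))%N.
        rewrite cP; move: cNle; rewrite cP; set c := #|P'|; lia.
      have HQ := fun y => @hom_PM k _ P' Px (a, 1) (b'.+1 - #|PN|) b' y dE.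
      pose q := \prod_(l | P' l) Lf (Px l) * M ^+ (b'.+1 - #|PN|).
      have sq : (size q <= b'.+1)%N by case: (HQ 0).
      have hq : hom b' q (Px i) != 0.
        case: (HQ (Px i)) => _ ->; rewrite mulf_neq0 ?expf_neq0 //.
        apply: prod_hom_neq0 => l /andP [_ Pl]; apply: Pdist; by rewrite eq_sym.
      have Eq : g = Lf (Px i) * q by rewrite /g (bigD1 i) //= -mulrA.
      case=> D0 D1 _ _; apply: (simple_root _ _ _ (Pxn i) sq hq).
      have y1n : (Py i).1 != 0 by [].
      rewrite -Eq; split.
      * by move/eqP: D0; rewrite mulf_eq0 (negbTE y1n) /= => /eqP.
      * by move/eqP: D1; rewrite mulf_eq0 (negbTE y1n) /= => /eqP.
  - move=> l y _ _; apply/negP => /eqP [G _].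
    move: G; rewrite /sec_dy0 -/(hom b'.+1 g (Phi l)) hg; apply/eqP.
    rewrite mulf_neq0 ?expf_neq0 //; apply: prod_hom_neq0 => i _; exact: PhiF.
Qed.
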